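(* Let $S$ be an inverse semigroup that is a mirror semigroup and is continuous. Then $S$ is separately Scott-continuous.
   Context: An inverse semigroup is a semigroup $S$ in which every $s$ has a unique $s^*$ with $ss^*s=s$ and $s^*ss^*=s^*$. $\Sigma=\Sigma(S)$ is the set of idempotents. The intrinsic order is $s\leqslant t$ iff $s=t\epsilon$ for some idempotent $\epsilon$. A subset is directed if nonempty and any two elements have an upper bound in it. $S$ is a mirror semigroup if every directed subset of $\Sigma$ having a supremum in $(\Sigma,\leqslant)$ also has a supremum in $(S,\leqslant)$. In a poset, $x$ is way-below $y$ ($x\ll y$) if for every directed subset $D$ that has a supremum with $y\leqslant \sup D$, there is $d\in D$ with $x\leqslant d$. A poset is continuous if for every element $s$ the set $\{t : t\ll s\}$ is directed with supremum $s$; $S$ is continuous if $(S,\leqslant)$ is. $S$ is separately Scott-continuous if for every directed $D\subseteq S$ with a supremum $\bigvee D$ in $S$ and every $s\in S$, $\bigvee(Ds)$ exists in $S$ and equals $(\bigvee D)s$. *)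

(* Defs.v *)
Section InvSemigroup.
Context {T : Type}.
Variable mul : T -> T -> T.

Definition is_inverse_semigroup : Prop :=
  (forall a b c, mul a (mul b c) = mul (mul a b) c) /\
  (forall s, exists! t, mul (mul s t) s = s /\ mul (mul t s) t = t).

Definition idem (e : T) : Prop := mul e e = e.

Definition ileq (s t : T) : Prop := exists e, idem e /\ s = mul t e.

(* generic order-theoretic notions relative to a carrier predicate P
   (the sub-poset {x | P x} with the order ileq restricted to it) *)
Definition upper_bound_in (P D : T -> Prop) (u : T) : Prop :=
  P u /\ forall d, D d -> ileq d u.

Definition is_sup_in (P D : T -> Prop) (u : T) : Prop :=
  upper_bound_in P D u /\ forall v, upper_bound_in P D v -> ileq u v.

Definition directed (D : T -> Prop) : Prop :=
  (exists d, D d) /\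
  forall a b, D a -> D b -> exists c, D c /\ ileq a c /\ ileq b c.

Definition allS : T -> Prop := fun _ => True.

Definition is_sup (D : T -> Prop) (u : T) : Prop := is_sup_in allS D u.

Definition mirror : Prop :=
  forall D : T -> Prop, (forall d, D d -> idem d) -> directed D ->
    (exists u, is_sup_in idem D u) -> exists u, is_sup D u.

Definition way_below (x y : T) : Prop :=
  forall D : T -> Prop, directed D -> forall u, is_sup D u -> ileq y u ->
    exists d, D d /\ ileq x d.

Definition continuous_S : Prop :=
  forall s, directed (fun t => way_below t s) /\ is_sup (fun t => way_below t s) s.

Definition sep_scott_continuous : Prop :=
  forall D : T -> Prop, directed D -> forall u, is_sup D u ->
    forall s, is_sup (fun x => exists d, D d /\ x = mul d s) (mul u s).

End InvSemigroup.

(* Main.v *)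
Require Import Defs.
From Stdlib Require Import ClassicalEpsilon.

Set Default Proof Using "All".
Section Aux.
Variable T : Type.
Variable mul : T -> T -> T.
Local Notation "a ** b" := (mul a b) (at level 40, left associativity).
Hypothesis assoc : forall a b c, a ** (b ** c) = (a ** b) ** c.
Variable st : T -> T.
Hypothesis st1 : forall s, s ** st s ** s = s.
Hypothesis st2 : forall s, st s ** s ** st s = st s.
Hypothesis stu : forall s t, s ** t ** s = s -> t ** s ** t = t -> t = st s.

Lemma stst s : st (st s) = s.
Proof. symmetry. apply stu; auto. Qed.

Lemma idem_st e : idem mul e -> st e = e.
Proof. unfold idem; intro H. symmetry. apply stu; rewrite H; exact H. Qed.

Lemma idem_mul e f : idem mul e -> idem mul f -> idem mul (e ** f).
Proof.
  unfold idem; intros He Hf.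
  set (x := st (e ** f)).
  assert (Hx1n : e ** f ** x ** e ** f = e ** f).
  { assert (H := st1 (e**f)). fold x in H. rewrite !assoc in H. exact H. }
  assert (Hx2n : x ** e ** f ** x = x).
  { assert (H := st2 (e**f)). fold x in H. rewrite !assoc in H. exact H. }
  assert (Hx : f ** x ** e = x).
  { unfold x. apply stu; fold x.
    - rewrite !assoc. rewrite <- (assoc e f f), Hf.
      rewrite <- (assoc _ e e), He. exact Hx1n.
    - rewrite !assoc. rewrite <- (assoc _ f f), Hf.
      rewrite <- (assoc _ e e), He.
      rewrite <- (assoc (f ** x) e f), <- (assoc f x (e**f)), (assoc x e f).
      rewrite <- (assoc f (x**e**f) x), Hx2n. reflexivity. }
  assert (Hxi : x ** x = x).
  { rewrite <- Hx at 1 2. rewrite !assoc.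
    rewrite <- (assoc (f ** x) e f), <- (assoc f x (e**f)), (assoc x e f).
    rewrite <- (assoc f (x**e**f) x), Hx2n.
    exact Hx. }
  assert (Hef : idem mul (e ** f)).
  { unfold idem.
    assert (E : e ** f = st x).
    { apply stu.
      - rewrite !assoc. exact Hx2n.
      - rewrite !assoc. exact Hx1n. }
    assert (E2 : x = st x). { apply stu; rewrite Hxi; exact Hxi. }
    rewrite E, <- E2. exact Hxi. }
  exact Hef.
Qed.

Lemma idem_comm e f : idem mul e -> idem mul f -> e ** f = f ** e.
Proof.
  intros He Hf.
  assert (Hef := idem_mul e f He Hf). assert (Hfe := idem_mul f e Hf He).
  unfold idem in *.
  assert (E1 : f ** e = st (e ** f)).
  { apply stu.
    - rewrite !assoc. rewrite <- (assoc e f f), Hf, <- (assoc _ e e), He.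
      rewrite <- (assoc (e**f) e f), Hef. reflexivity.
    - rewrite !assoc. rewrite <- (assoc f e e), He, <- (assoc _ f f), Hf.
      rewrite <- (assoc (f**e) f e), Hfe. reflexivity. }
  rewrite E1. symmetry. apply idem_st. exact Hef.
Qed.

Ltac norm := repeat rewrite assoc; reflexivity.

Lemma st_mul a b : st (a ** b) = st b ** st a.
Proof.
  symmetry. apply stu.
  - transitivity (a ** ((b ** st b) ** (st a ** a)) ** b); [norm|].
    rewrite (idem_comm (b ** st b) (st a ** a)).
    + transitivity ((a ** st a ** a) ** (b ** st b ** b)); [norm|].
      rewrite !st1. reflexivity.
    + unfold idem. transitivity ((b ** st b ** b) ** st b); [norm|]. rewrite st1. reflexivity.
    + unfold idem. transitivity ((st a ** a ** st a) ** a); [norm|]. rewrite st2. reflexivity.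
  - transitivity (st b ** ((st a ** a) ** (b ** st b)) ** st a); [norm|].
    rewrite (idem_comm (st a ** a) (b ** st b)).
    + transitivity ((st b ** b ** st b) ** (st a ** a ** st a)); [norm|].
      rewrite !st2. reflexivity.
    + unfold idem. transitivity ((st a ** a ** st a) ** a); [norm|]. rewrite st2. reflexivity.
    + unfold idem. transitivity ((b ** st b ** b) ** st b); [norm|]. rewrite st1. reflexivity.
Qed.

Lemma idem_stss s : idem mul (st s ** s).
Proof. unfold idem. transitivity ((st s ** s ** st s) ** s); [norm|]. rewrite st2. reflexivity. Qed.

Lemma idem_sst s : idem mul (s ** st s).
Proof. unfold idem. transitivity ((s ** st s ** s) ** st s); [norm|]. rewrite st1. reflexivity. Qed.

Lemma ileq_char a b : ileq mul a b -> a = b ** (st a ** a).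
Proof.
  intros [g [Hg ->]]. rewrite st_mul, (idem_st g Hg). symmetry.
  transitivity (b ** ((g ** (st b ** b)) ** g)); [norm|].
  rewrite (idem_comm g (st b ** b) Hg (idem_stss b)).
  transitivity ((b ** st b ** b) ** (g ** g)); [norm|].
  rewrite st1. unfold idem in Hg. rewrite Hg. reflexivity.
Qed.

Lemma ileq_refl a : ileq mul a a.
Proof. exists (st a ** a). split. apply idem_stss. rewrite assoc, st1. reflexivity. Qed.

Lemma ileq_trans a b c : ileq mul a b -> ileq mul b c -> ileq mul a c.
Proof.
  intros [e [He ->]] [g [Hg ->]]. exists (g ** e). split.
  apply idem_mul; auto. norm.
Qed.

Lemma ileq_rmul a b s : ileq mul a b -> ileq mul (a ** s) (b ** s).
Proof.
  intros [e [He ->]]. exists (st s ** e ** s). split.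
  - unfold idem.
    transitivity (st s ** ((e ** (s ** st s)) ** e) ** s); [norm|].
    rewrite (idem_comm e (s ** st s) He (idem_sst s)).
    transitivity ((st s ** s ** st s) ** (e ** e) ** s); [norm|].
    rewrite st2. unfold idem in He. rewrite He. reflexivity.
  - transitivity (b ** ((s ** st s) ** e) ** s); [|norm].
    rewrite <- (idem_comm e (s ** st s) He (idem_sst s)).
    transitivity (b ** e ** (s ** st s ** s)); [|norm].
    rewrite st1. reflexivity.
Qed.

Lemma idem_le v e : idem mul e -> ileq mul (v ** e) v.
Proof. intros He. exists e. auto. Qed.

Lemma key5 w d u f : idem mul f -> ileq mul w d -> ileq mul w (u ** f) ->
  ileq mul w (d ** f).
Proof.
  intros Hf Hd Hu.
  apply ileq_char in Hd. apply ileq_char in Hu.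
  assert (Hei := idem_stss w).
  remember (st w ** w) as e eqn:Heqe.
  assert (He : e = e ** f ** (st u ** u) ** f ** e).
  { rewrite Heqe at 1. rewrite Hu at 1 2.
    rewrite !st_mul, (idem_st e Hei), (idem_st f Hf). norm. }
  assert (Hef : e ** f = e).
  { rewrite He at 1.
    transitivity (e ** f ** (st u ** u) ** f ** (e ** f)); [norm|].
    rewrite (idem_comm e f Hei Hf) at 2.
    transitivity (e ** f ** (st u ** u) ** (f ** f) ** e); [norm|].
    unfold idem in Hf. rewrite Hf. symmetry. exact He. }
  exists e. split; auto.
  rewrite <- assoc, <- (idem_comm e f Hei Hf), Hef. exact Hd.
Qed.

End Aux.

Theorem lemma5p1 (T : Type) (mul : T -> T -> T) :
  is_inverse_semigroup mul -> mirror mul -> continuous_S mul ->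
  sep_scott_continuous mul.
Proof.
  intros [assoc Hinv] _ Hcont.
  set (st := fun s => proj1_sig (constructive_indefinite_description _
                        (match Hinv s with ex_intro _ t (conj H _) => ex_intro _ t H end))).
  assert (Hst : forall s, mul (mul s (st s)) s = s /\ mul (mul (st s) s) (st s) = st s).
  { intro s. unfold st. destruct (constructive_indefinite_description _ _) as [t Ht]. exact Ht. }
  assert (stu : forall s t, mul (mul s t) s = s -> mul (mul t s) t = t -> t = st s).
  { intros s t H1 H2. destruct (Hinv s) as [t0 [_ U]].
    rewrite <- (U t (conj H1 H2)). apply U. apply Hst. }
  assert (st1 : forall s, mul (mul s (st s)) s = s) by (intro; apply Hst).
  assert (st2 : forall s, mul (mul (st s) s) (st s) = st s) by (intro; apply Hst).
  assert (trans := ileq_trans T mul assoc st st1 st2 stu).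
  assert (refl := ileq_refl T mul assoc st st1 st2 stu).
  intros D HD u Hu s. split.
  - split; [exact I|]. intros x [d [Hd ->]].
    apply (ileq_rmul T mul assoc st st1 st2 stu). apply Hu. exact Hd.
  - intros v [_ Hv].
    set (f := mul s (st s)).
    assert (Hfi : idem mul f) by apply (idem_sst T mul assoc st st1 st2 stu).
    set (y := mul v (st s)).
    assert (Huf : ileq mul (mul u f) y).
    { destruct (Hcont (mul u f)) as [_ [_ Hl]]. apply Hl. split; [exact I|].
      intros w Hw.
      assert (Hwuf : ileq mul w (mul u f)).
      { destruct (Hw (fun x => x = mul u f)) with (u := mul u f) as [t [-> Ht]]; auto.
        - split. exists (mul u f); reflexivity.
          intros a b -> ->. exists (mul u f). auto.
        - split. split. exact I. intros d ->. apply refl.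
          intros v' [_ Hv']. apply Hv'. reflexivity. }
      destruct (Hw D HD u Hu) as [d [Hd Hwd]].
      { exists f. split; auto. }
      apply trans with (mul d f).
      + apply (key5 T mul assoc st st1 st2 stu) with u; auto.
      + unfold f, y. rewrite assoc.
        apply (ileq_rmul T mul assoc st st1 st2 stu). apply Hv. exists d. auto. }
    apply trans with (mul y s).
    + replace (mul u s) with (mul (mul u f) s).
      * apply (ileq_rmul T mul assoc st st1 st2 stu). exact Huf.
      * unfold f. rewrite <- assoc, st1. reflexivity.
    + unfold y. rewrite <- assoc. exists (mul (st s) s). split; auto.
      apply (idem_stss T mul assoc st st1 st2 stu).
Qed.
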